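(* Let $X$ be a Tychonoff space and let $\tau$ be the $P$-number of $X$. Suppose $X$ has a $\tau$-discrete basis of clopen sets, i.e. a base $\mathcal B=\bigcup_{\alpha<\tau}\mathcal B_\alpha$ for the topology of $X$ consisting of clopen sets, where each $\mathcal B_\alpha$ is a discrete family in $X$. Then $X$ is a generalized ordered space (GO-space).
   Context: All spaces are Tychonoff. The $P$-number of a space $X$ is $|X|$ if $X$ is discrete; otherwise it is the largest cardinal $\tau$ such that the intersection of any family of fewer than $\tau$ open subsets of $X$ is open (equivalently, the minimum cardinality of a family of open sets whose intersection is not open). A family of subsets of $X$ is discrete if every point of $X$ has a neighborhood meeting at most one member of the family. A linearly ordered topological space (LOTS) is a space whose topology is generated by the open intervals and open rays of some linear order; a GO-space (generalized ordered space) is a space homeomorphic to a subspace of a LOTS. *)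

(* Defs.v *)
From HB Require Import structures.
From mathcomp Require Import all_boot all_order all_algebra.
From mathcomp Require Import all_classical all_reals all_analysis.
From mathcomp Require Import Rstruct Rstruct_topology.
Set Implicit Arguments. Unset Strict Implicit. Unset Printing Implicit Defensive.
Import Order.TTheory GRing.Theory Num.Theory.
Local Open Scope classical_set_scope.

Definition completely_regular (X : topologicalType) : Prop :=
  forall (A : set X) (x : X), closed A -> ~ A x ->
    exists f : X -> Rdefinitions.R,
      continuous f /\ f x = 0%R /\ (forall a, A a -> f a = 1%R).

Definition tychonoff_space (X : topologicalType) : Prop :=
  accessible_space X /\ completely_regular X.

Definition discrete_top (X : topologicalType) : Prop :=
  forall A : set X, open A.

(* [set: A] has cardinality equal to the P-number of X. *)
Definition is_Pnumber (X : topologicalType) (A : Type) : Prop :=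
  (discrete_top X -> card_eq [set: A] [set: X]) /\
  (~ discrete_top X ->
     (exists G : A -> set X, (forall a, open (G a)) /\ ~ open (\bigcap_a G a)) /\
     (forall (J : Type) (G : J -> set X),
        card_le [set: J] [set: A] -> ~ card_le [set: A] [set: J] ->
        (forall j, open (G j)) -> open (\bigcap_j G j))).

Definition discrete_family (X : topologicalType) (F : set (set X)) : Prop :=
  forall x : X, exists2 U, nbhs x U &
    forall V W, F V -> F W -> U `&` V !=set0 -> U `&` W !=set0 -> V = W.

Definition GO_space (X : topologicalType) : Prop :=
  exists (d : Order.disp_t) (L : orderType d) (f : X -> order_topology L),
    injective f /\
    (forall U : set X, open U <-> exists V : set (order_topology L), open V /\ U = f @^-1` V).

(* Main.v *)
Require Import Defs.
From HB Require Import structures.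
From mathcomp Require Import all_boot all_order all_algebra.
From mathcomp Require Import all_classical all_reals all_analysis.
From mathcomp Require Import wochoice.
From Stdlib Require Import Wellfounded.
Set Implicit Arguments. Unset Strict Implicit. Unset Printing Implicit Defensive.
Local Open Scope classical_set_scope.

Record sto (T : Type) := STO {
  slt : T -> T -> Prop;
  slt_irr : forall x, ~ slt x x;
  slt_trans : forall x y z, slt x y -> slt y z -> slt x z;
  slt_total : forall x y, x <> y -> slt x y \/ slt y x }.
Record wo (T : Type) := WO { wsto :> sto T; wo_wf : well_founded (slt wsto) }.

Lemma wf_min (T : Type) (R : T -> T -> Prop) : well_founded R ->
  forall P : T -> Prop, (exists x, P x) -> exists x, P x /\ forall y, R y x -> ~ P y.
Proof.
move=> wf P [x Px]; apply: contrapT => H; apply: (@well_founded_ind _ R wf (fun x => ~ P x)) Px.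
move=> z IH Pz; apply: H; exists z; split => // y Ryz Py; exact: IH Ryz Py.
Qed.

Definition wf_sto_aux := STO.
Definition eqT (T : Type) := T.
HB.instance Definition _ (T : Type) := gen_eqMixin (eqT T).

Lemma exists_wo (T : Type) : inhabited (wo T).
Proof.
have [R wR] := @well_ordering_principle (eqT T).
have minP : forall P : {pred eqT T}, (exists x, P x) -> exists z, P z /\ forall x, P x -> R z x.
  move=> P [x Px]; have [|z [[Pz lb] _]] := wR P; first by exists x.
  by exists z; split => // y Py; apply: lb.
have tot : forall x y : eqT T, R x y \/ R y x.
  move=> x y; have [|z [/orP[] /eqP -> H]] := minP (pred2 x y); first by exists x; rewrite /= eqxx.
  - by left; apply: H; rewrite /= eqxx orbT.
  - by right; apply: H; rewrite /= eqxx.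
have anti : forall x y : eqT T, R x y -> R y x -> x = y.
  move=> x y Rxy Ryx; have [|z [_ U]] := wR (pred2 x y); first by exists x; rewrite inE /= eqxx.
  have Rxx : R x x by case: (tot x x).
  have Ryy : R y y by case: (tot y y).
  rewrite -(U x) ?(U y) //; split; rewrite ?inE /= ?eqxx ?orbT //;
    by move=> w; rewrite inE /= => /orP[] /eqP ->.
have trans : forall x y z : eqT T, R x y -> R y z -> R x z.
  move=> x y z Rxy Ryz; have [|m [/or3P[] /eqP -> H]] := minP (pred3 x y z); first by exists x; rewrite /= eqxx.
  - by apply: H; rewrite /= eqxx !orbT.
  - have := anti _ _ Rxy (H x _); rewrite /= eqxx => /(_ isT) ->; exact: Ryz.
  - have := anti _ _ Ryz (H y _); rewrite /= eqxx orbT => /(_ isT) <-; exact: Rxy.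
pose lt (x y : T) := R x y /\ x <> y.
have wf : well_founded lt.
  move=> x; apply: contrapT => nA.
  have [|z [nAz H]] := minP (fun y => `[< ~ Acc lt y >]); first by exists x; apply/asboolP.
  move/asboolP: nAz; apply; constructor => y [Ryz nyz]; apply: contrapT => nAy.
  by apply: nyz; apply: anti => //; apply: H; apply/asboolP.
have irr : forall x, ~ lt x x by move=> x [].
have tr : forall x y z, lt x y -> lt y z -> lt x z.
  move=> x y z [Rxy nxy] [Ryz nyz]; split; first exact: trans Ryz.
  by move=> exz; apply: nxy; apply: anti => //; rewrite exz.
have tt : forall x y, x <> y -> lt x y \/ lt y x.
  by move=> x y nxy; case: (tot x y) => H; [left|right]; split => // /esym.
by constructor; exact: (@WO T (@STO T lt irr tr tt) wf).
Qed.
Section Lex.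
Variables (I K : Type) (wI : wo I) (wK : sto K).

Definition ltO (o1 o2 : option K) : Prop :=
  match o1, o2 with
  | None, Some _ => True
  | Some a, Some b => slt wK a b
  | _, _ => False
  end.

Lemma ltO_irr o : ~ ltO o o.
Proof. by case: o => [a|] //=; apply: slt_irr. Qed.

Lemma ltO_trans o1 o2 o3 : ltO o1 o2 -> ltO o2 o3 -> ltO o1 o3.
Proof. by case: o1 => [a|]; case: o2 => [b|]; case: o3 => [c|] //=; apply: slt_trans. Qed.

Lemma ltO_total o1 o2 : o1 <> o2 -> ltO o1 o2 \/ ltO o2 o1.
Proof.
case: o1 => [a|]; case: o2 => [b|] //=; try by auto.
by move=> nab; apply: slt_total => eab; apply: nab; rewrite eab.
Qed.

Definition ltV (p q : option K * nat) : Prop :=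
  ltO p.1 q.1 \/ (p.1 = q.1 /\ (p.2 < q.2)%N).

Lemma ltV_irr p : ~ ltV p p.
Proof. by case=> [/ltO_irr|[_]]; rewrite ?ltnn. Qed.

Lemma ltV_trans p q r : ltV p q -> ltV q r -> ltV p r.
Proof.
case=> [H1|[E1 H1]] [H2|[E2 H2]].
- by left; apply: ltO_trans H2.
- by left; rewrite -E2.
- by left; rewrite E1.
- by right; split; [rewrite E1|apply: ltn_trans H2].
Qed.

Lemma ltV_total p q : p <> q -> ltV p q \/ ltV q p.
Proof.
case: p => o1 n1; case: q => o2 n2 /= npq.
have [e|ne] := pselect (o1 = o2); last first.
  by case: (ltO_total ne); [left|right]; left.
subst o2; case: (ltngtP n1 n2) => l.
- by left; right.
- by right; right.
- by subst n2; exfalso; apply: npq.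
Qed.

Definition lexlt (f g : I -> option K * nat) : Prop :=
  exists b, (forall c, slt wI c b -> f c = g c) /\ ltV (f b) (g b).

Lemma lexlt_irr f : ~ lexlt f f.
Proof. by case=> b [_ /ltV_irr]. Qed.

Lemma lexlt_trans f g h : lexlt f g -> lexlt g h -> lexlt f h.
Proof.
move=> [b1 [E1 L1]] [b2 [E2 L2]].
have [e|ne] := pselect (b1 = b2).
  subst b2; exists b1; split; last exact: ltV_trans L2.
  by move=> c cb; rewrite E1 // E2.
case: (slt_total wI ne) => lt12.
- exists b1; split; last by rewrite -(E2 _ lt12).
  by move=> c cb; rewrite E1 // E2 //; apply: slt_trans lt12.
- exists b2; split; last by rewrite (E1 _ lt12).
  by move=> c cb; rewrite E1 ?E2 //; apply: slt_trans lt12.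
Qed.

Lemma lexlt_total f g : f <> g -> lexlt f g \/ lexlt g f.
Proof.
move=> nfg; have [|b [nb mb]] := wf_min (wo_wf wI) (P := fun c => f c <> g c).
  by apply: contrapT => H; apply: nfg; apply: funext => c; apply: contrapT => ne; apply: H; exists c.
have E : forall c, slt wI c b -> f c = g c by move=> c /mb; apply: contrapT.
case: (ltV_total nb) => L; [left|right]; exists b; split => // c /E //.
Qed.

Lemma lex_between (a : I) (o : option K) (g h : I -> option K * nat) :
  (forall c, (h c).2 = 1%N) ->
  lexlt (fun c => if pselect (c = a) is left _ then (o, 0%N) else g c) h ->
  lexlt h (fun c => if pselect (c = a) is left _ then (o, 2%N) else g c) ->
  (h a).1 = o.
Proof.
set lo := (fun c => _); set hi := (fun c => _) => h2 [w1 [E1 L1]] [w2 [E2 L2]].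
have loa : lo a = (o, 0%N) by rewrite /lo; case: pselect.
have hia : hi a = (o, 2%N) by rewrite /hi; case: pselect.
have lohi : forall c, c <> a -> lo c = hi c by move=> c ca; rewrite /lo /hi; case: pselect.
have ha1 : forall p, h a = p -> p.2 = 1%N by move=> p <-.
have w1a : w1 = a.
  apply: contrapT => nw1.
  case: (slt_total wI nw1) => lw.
  - have [e|ne] := pselect (w2 = w1).
      subst w2; rewrite (lohi _ nw1) in L1; exact: ltV_irr (ltV_trans L1 L2).
    case: (slt_total wI ne) => lw2.
    + have e := E1 _ lw2; have [e2|ne2] := pselect (w2 = a).
        by subst w2; move: (ha1 _ (esym e)); rewrite loa.
      by rewrite -e -(lohi _ ne2) in L2; exact: ltV_irr L2.
    + have e := E2 _ lw2; rewrite -(lohi _ nw1) in e; rewrite e in L1; exact: ltV_irr L1.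
  - by move: (ha1 _ (esym (E1 _ lw))); rewrite loa.
subst w1.
have w2a : w2 = a.
  apply: contrapT => nw2.
  case: (slt_total wI nw2) => lw.
  - have e := E1 _ lw; rewrite -e (lohi _ nw2) in L2; exact: ltV_irr L2.
  - by move: (ha1 _ (E2 _ lw)); rewrite hia.
subst w2; rewrite loa in L1; rewrite hia in L2.
move: L1 L2 (h2 a); case: (h a) => o' n /= [l1|[e1 _]] [l2|[e2 _]] _.
- by case: (ltO_irr (ltO_trans l1 l2)).
- exact: e2.
- exact: esym e1.
- exact: esym e1.
Qed.

End Lex.

Definition lexT (I K : Type) (wI : wo I) (wK : sto K) := I -> option K * nat.
HB.instance Definition _ (I K : Type) (wI : wo I) (wK : sto K) := gen_eqMixin (lexT wI wK).
HB.instance Definition _ (I K : Type) (wI : wo I) (wK : sto K) := gen_choiceMixin (lexT wI wK).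

Section LexOrder.
Variables (I K : Type) (wI : wo I) (wK : sto K).
Definition lxlt (f g : lexT wI wK) : bool := `[< lexlt wI wK f g >].
Definition lxle (f g : lexT wI wK) : bool := (f == g) || lxlt f g.
Definition lxmeet (f g : lexT wI wK) := if lxlt f g then f else g.
Definition lxjoin (f g : lexT wI wK) := if lxlt f g then g else f.
Lemma lx_le_def f g : lxle f g = (f == g) || lxlt f g. Proof. by []. Qed.
Lemma lx_meet_def f g : lxmeet f g = if lxlt f g then f else g. Proof. by []. Qed.
Lemma lx_join_def f g : lxjoin f g = if lxlt f g then g else f. Proof. by []. Qed.
Lemma lx_irr : irreflexive lxlt.
Proof. by move=> f; apply/asboolP/lexlt_irr. Qed.
Lemma lx_trans : transitive lxlt.
Proof. by move=> g f h /asboolP H1 /asboolP H2; apply/asboolP; apply: (@lexlt_trans _ _ wI wK _ _ _ H1 H2). Qed.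
Lemma lx_total f g : f != g -> lxlt f g || lxlt g f.
Proof.
move=> /eqP nfg; case: (@lexlt_total _ _ wI wK f g nfg) => H; apply/orP; [left|right]; exact/asboolP.
Qed.
End LexOrder.

Fact lex_disp : Order.disp_t. Proof. exact: Order.Disp tt tt. Qed.

HB.instance Definition _ (I K : Type) (wI : wo I) (wK : sto K) :=
  Order.LtOrder.Build lex_disp (lexT wI wK) (@lx_le_def _ _ wI wK) (@lx_meet_def _ _ wI wK)
   (@lx_join_def _ _ wI wK) (@lx_irr _ _ wI wK) (@lx_trans _ _ wI wK) (@lx_total _ _ wI wK).

Lemma lexltE (I K : Type) (wI : wo I) (wK : sto K) (f g : lexT wI wK) :
  (f < g)%O <-> lexlt wI wK f g.
Proof. by split => [/asboolP|H]; last exact/asboolP. Qed.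
Lemma sig_inj (T : Type) (P : T -> Prop) (x y : {c | P c}) :
  proj1_sig x = proj1_sig y -> x = y.
Proof. case: x => x px; case: y => y py /= exy; subst y; congr exist; exact: Prop_irrelevance. Qed.

Lemma small_wo (A : Type) : exists w : wo A,
  forall b, ~ exists e : A -> {c | slt w c b}, injective e.
Proof.
have [w0] := exists_wo A.
have [[b Pb]|nP] := pselect (exists b, exists e : A -> {c | slt w0 c b}, injective e); last first.
  by exists w0 => b Pb; apply: nP; exists b.
have [b0 [[e ie] mb0]] := wf_min (wo_wf w0) (P := fun b => exists e : A -> {c | slt w0 c b}, injective e) (ex_intro _ b Pb).
pose lt1 (x y : A) := slt w0 (proj1_sig (e x)) (proj1_sig (e y)).
have irr : forall x, ~ lt1 x x by move=> x; apply: slt_irr.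
have tr : forall x y z, lt1 x y -> lt1 y z -> lt1 x z by move=> x y z; apply: slt_trans.
have tt : forall x y, x <> y -> lt1 x y \/ lt1 y x.
  move=> x y nxy; apply: slt_total => /sig_inj /ie; exact: nxy.
have wf : well_founded lt1 by apply: (@wf_inverse_image _ _ _ (fun x => proj1_sig (e x))); apply: wo_wf.
exists (@WO A (@STO A lt1 irr tr tt) wf) => b1 [g ig].
apply: (mb0 (proj1_sig (e b1))); first exact: (proj2_sig (e b1)).
exists (fun a => exist (fun c => slt w0 c (proj1_sig (e b1))) (proj1_sig (e (proj1_sig (g a)))) (proj2_sig (g a))).
by move=> x y /(congr1 (@proj1_sig _ _)) /= /sig_inj /ie /sig_inj /ig.
Qed.
Section Topo.
Variables (X : topologicalType) (A : Type) (B : A -> set (set X)).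
Variables (wI : wo A) (wK : sto (set X)).
Hypothesis Bclopen : forall a, B a `<=` clopen.
Hypothesis Bdisc : forall a, discrete_family (B a).
Hypothesis Hseg : forall b (G : {c | slt wI c b} -> set X),
  (forall j, open (G j)) -> open (\bigcap_j G j).

Definition code (x : X) : lexT wI wK := fun a =>
  ((if pselect (exists b, B a b /\ b x) is left h then Some (proj1_sig (cid h)) else None), 1%N).

Lemma uniq_mem a V W x : B a V -> B a W -> V x -> W x -> V = W.
Proof.
move=> BV BW Vx Wx; have [U Ux H] := Bdisc a x.
by apply: H => //; exists x; split => //; apply: nbhs_singleton.
Qed.

Lemma code_some x a b : B a b -> b x -> code x a = (Some b, 1%N).
Proof.
move=> Bb bx; rewrite /code; case: pselect => [h|[]]; last by exists b.
by case: (cid h) => b' [Bb' b'x] /=; rewrite (uniq_mem Bb' Bb b'x bx).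
Qed.

Lemma code_none x a : ~ (exists b, B a b /\ b x) -> code x a = (None, 1%N).
Proof. by move=> nb; rewrite /code; case: pselect. Qed.

Lemma code_snd x a : (code x a).2 = 1%N.
Proof. by rewrite /code; case: pselect. Qed.

Lemma code_memP y a b : (code y a).1 = Some b -> B a b /\ b y.
Proof. by rewrite /code; case: pselect => //= h [<-]; exact: proj2_sig (cid h). Qed.

Lemma level_open x a : open [set y | code y a = code x a].
Proof.
have [[b [Bb bx]]|nb] := pselect (exists b, B a b /\ b x).
  rewrite (code_some Bb bx).
  have -> : [set y | code y a = (Some b, 1%N)] = b.
    apply/seteqP; split => y /=; last by move=> by_; rewrite (code_some Bb by_).
    have [[b' [Bb' b'y]]|nb'] := pselect (exists b, B a b /\ b y).
      by rewrite (code_some Bb' b'y) => -[<-].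
    by rewrite code_none.
  by case: (Bclopen Bb).
rewrite (code_none nb) openE => y /=; rewrite /interior.
have [[b' [Bb' b'y]]|nby] := pselect (exists b, B a b /\ b y).
  by rewrite (code_some Bb' b'y).
move=> _; have [U Uy H] := Bdisc a y.
have good : forall V : set X, nbhs y V -> (forall z W, V z -> B a W -> ~ W z) ->
    nbhs y [set z | code z a = (None, 1%N)].
  move=> V Vy HV; apply: filterS Vy => z Vz /=; apply: code_none => -[W [BW Wz]].
  exact: (HV z W Vz BW Wz).
have [[W [BW [z [Uz Wz]]]]|nW] := pselect (exists W, B a W /\ (U `&` W) !=set0).
  apply: (good (U `&` ~` W)).
    apply: filterI => //; apply: open_nbhs_nbhs; split.
      by rewrite openC; case: (Bclopen BW).
    by move=> Wy; apply: nby; exists W.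
  move=> z' W' [Uz' nWz'] BW' W'z'; apply: nWz'.
  have <- // : W' = W by apply: H => //; [exists z'|exists z].
apply: (good U Uy) => z' W' Uz' BW' W'z'; apply: nW; exists W'; split => //; by exists z'.
Qed.

Lemma cyl_open y w : open ((\bigcap_(j : {c | slt wI c w}) [set z | code z (proj1_sig j) = code y (proj1_sig j)])
   `&` [set z | code z w = code y w]).
Proof. by apply: openI; [apply: Hseg => j|]; apply: level_open. Qed.

Lemma pre_gt (g : lexT wI wK) : open (code @^-1` [set h | (g < h)%O]).
Proof.
rewrite openE => y /= /lexltE [w [E L]]; rewrite /interior.
apply: (@filterS _ _ _ _ _ _ (open_nbhs_nbhs (conj (cyl_open y w) _))); last first.
  by split => // j _.
move=> z [Hz1 Hz2] /=; apply/lexltE; exists w; split; last by rewrite Hz2.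
by move=> c cw; rewrite E // (Hz1 (exist _ c cw)).
Qed.

Lemma pre_lt (g : lexT wI wK) : open (code @^-1` [set h | (h < g)%O]).
Proof.
rewrite openE => y /= /lexltE [w [E L]]; rewrite /interior.
apply: (@filterS _ _ _ _ _ _ (open_nbhs_nbhs (conj (cyl_open y w) _))); last first.
  by split => // j _.
move=> z [Hz1 Hz2] /=; apply/lexltE; exists w; split; last by rewrite Hz2.
by move=> c cw; rewrite -E // (Hz1 (exist _ c cw)).
Qed.

End Topo.
Section Topo2.
Variables (X : topologicalType) (A : Type) (B : A -> set (set X)).
Variables (wI : wo A) (wK : sto (set X)).
Hypothesis Bclopen : forall a, B a `<=` clopen.
Hypothesis Bdisc : forall a, discrete_family (B a).
Hypothesis Hseg : forall b (G : {c | slt wI c b} -> set X),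
  (forall j, open (G j)) -> open (\bigcap_j G j).

Lemma pre_itv (i : interval (lexT wI wK)) : itv_open_ends i ->
  open ((code B wI wK) @^-1` [set` i]).
Proof.
have R1 : forall l, open ((code B wI wK) @^-1` `]l, +oo[).
  move=> l; suff -> : (code B wI wK) @^-1` `]l, +oo[ = (code B wI wK) @^-1` [set h | (l < h)%O].
    exact: pre_gt.
  by apply/seteqP; split => x /=; rewrite in_itv /= andbT.
have R2 : forall r, open ((code B wI wK) @^-1` `]-oo, r[).
  move=> r; suff -> : (code B wI wK) @^-1` `]-oo, r[ = (code B wI wK) @^-1` [set h | (h < r)%O].
    exact: pre_lt.
  by apply/seteqP; split => x /=; rewrite in_itv.
case: i => [[[]l|[]] [[]r|[]]] //= _.
- rewrite (set_itv_splitI `]l, r[%O) preimage_setI; apply: openI; [exact: R1|exact: R2].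
- by rewrite set_itvE preimage_setT; exact: openT.
Qed.
End Topo2.
Lemma card_le_of_inj (T U : Type) (f : T -> U) : injective f -> card_le [set: T] [set: U].
Proof.
move=> fi; apply: (@card_le_trans _ _ _ (f @` setT)); last exact: subset_card_le.
have := @inj_card_eq _ _ setT f (in2W fi); rewrite card_eq_le => /andP[_ ->] //.
Qed.

Lemma inj_of_card_le (T U : Type) : card_le [set: T] [set: U] -> exists f : T -> U, injective f.
Proof.
move/card_leP => [f].
exists (fun t => val (f (@SigSub _ _ _ t (mem_set (I : [set: T] t))))).
move=> t1 t2 /val_inj E.
have := @inj _ _ _ f _ _ (mem_set I) (mem_set I) E.
by move=> /(congr1 val).
Qed.

Unset Implicit Arguments.

Theorem theorem2p1 (X : topologicalType) (A : Type)
  (B : A -> set (set X)) :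
  tychonoff_space X ->
  is_Pnumber X A ->
  (forall a, B a `<=` clopen) ->
  (forall a, discrete_family (B a)) ->
  basis (\bigcup_a B a) ->
  GO_space X.
Proof.
move=> [acc _] HP Bcl Bd [Bopen Bconv].
have [wK] := exists_wo (set X).
have [wI Hseg] : exists wI : wo A, forall b (G : {c | slt wI c b} -> set X),
    (forall j, open (G j)) -> open (\bigcap_j G j).
  have [dX|nd] := pselect (discrete_top X).
    by have [w] := exists_wo A; exists w => b G _; apply: dX.
  have [w Hsmall] := small_wo A; exists w => b G oG.
  apply: (HP.2 nd).2 => //.
    by apply: (@card_le_of_inj _ _ (@proj1_sig _ _)) => x y; apply: sig_inj.
  by move=> /inj_of_card_le H; apply: (Hsmall b).
pose f := code B wI wK.
have basisP : forall x (U : set X), open U -> U x -> exists a b, B a b /\ b x /\ b `<=` U.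
  move=> x U oU Ux.
  have [V [[a _ BV] Vx] VU] := Bconv x U (open_nbhs_nbhs (conj oU Ux)).
  by exists a, V.
exists lex_disp, (lexT wI wK), (f : X -> order_topology (lexT wI wK)).
split.
  move=> x y fxy; apply: contrapT => /eqP nxy.
  have [U [oU /set_mem Ux /set_mem nUy]] := acc x y nxy.
  have [a [b [Bb [bx bU]]]] := basisP x U oU Ux.
  have := @code_some X A B wI wK Bd _ _ _ Bb bx; rewrite /f in fxy; rewrite fxy => /(congr1 fst) /(@code_memP X A B wI wK) [_ by_].
  exact: nUy (bU _ by_).
move=> U; split => [oU|[V [oV ->]]]; last first.
  rewrite openE => x /= Vx; rewrite /interior.
  have : nbhs (f x : order_topology (lexT wI wK)) V by apply: open_nbhs_nbhs.
  rewrite itv_nbhsE => -[i [oi xi] iV].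
  apply: (@filterS _ _ _ (f @^-1` [set` i])); first by move=> z /iV.
  by apply: open_nbhs_nbhs; split; [exact: (@pre_itv X A B wI wK Bcl Bd Hseg _ oi)|].
pose lo (p : X * A) : lexT wI wK := fun c =>
  if pselect (c = p.2) is left _ then ((f p.1 p.2).1, 0%N) else f p.1 c.
pose hi (p : X * A) : lexT wI wK := fun c =>
  if pselect (c = p.2) is left _ then ((f p.1 p.2).1, 2%N) else f p.1 c.
pose P := [set p : X * A | exists b, B p.2 b /\ b p.1 /\ b `<=` U].
exists (\bigcup_(p in P) (`]lo p, hi p[ : set (order_topology (lexT wI wK)))).
split.
  by apply: bigcup_open => p _; apply: itv_open.
apply/seteqP; split => x.
  move=> Ux; have [a [b [Bb [bx bU]]]] := basisP x U oU Ux.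
  exists (x, a); first by exists b.
  rewrite /= in_itv /=; apply/andP; split; apply/lexltE; exists a; split.
  - by move=> c ca; rewrite /lo /=; case: pselect => // e; subst c; case: (slt_irr ca).
  - by rewrite /lo /=; case: pselect => // _; right; split => //; rewrite (@code_snd X A B wI wK).
  - by move=> c ca; rewrite /hi /=; case: pselect => // e; subst c; case: (slt_irr ca).
  - by rewrite /hi /=; case: pselect => // _; right; split => //; rewrite (@code_snd X A B wI wK).
move=> [[y a] [b [Bb [by_ bU]]]]; rewrite /= in_itv /= => /andP[/lexltE L1 /lexltE L2].
have := @lex_between _ _ wI wK a _ _ _ (@code_snd X A B wI wK x) L1 L2.
rewrite /f (@code_some X A B wI wK Bd _ _ _ Bb by_) /= => /(@code_memP X A B wI wK) [_ bx].
exact: bU.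
Qed.
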